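(* Let $G=\mathbb{R}^2\setminus\{-e_1,e_1\}$, where $e_1=(1,0)$. Let $\beta>0$ be the unique positive solution of $\operatorname{arsinh}t+\arctan t=\pi$ ($\beta\approx3.1841$). Then \[ A_G\ge\frac{2\operatorname{arsinh}\beta}{\log\left(1+\frac{2\beta}{\sqrt{1+\beta^2}}\right)}\approx3.5131 . \]
   Context: For a domain $G\subsetneq\mathbb{R}^n$ let $d_G(x)=d(x,\partial G)$; $k_G(x,y)=\inf_\gamma\int_\gamma\frac{|dx|}{d_G(x)}$ over rectifiable curves $\gamma\subset G$ joining $x,y$ (quasihyperbolic distance); $j_G(x,y)=\log\left(1+\frac{|x-y|}{\min\{d_G(x),d_G(y)\}}\right)$; the uniformity constant is $A_G=\inf\{A\ge1: k_G\le A\,j_G\text{ on }G\times G\}$ (with $\inf\emptyset=+\infty$). *)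

(* Defs.v *)
From Stdlib Require Import Reals.
Open Scope R_scope.

Definition pt := (R * R)%type.

Definition dist2 (p q : pt) : R :=
  sqrt ((fst p - fst q) ^ 2 + (snd p - snd q) ^ 2).

Definition e1 : pt := (1, 0).
Definition me1 : pt := (-1, 0).

Definition inG (p : pt) : Prop := p <> e1 /\ p <> me1.

(* d_G(x) = d(x, boundary G) = distance to {-e1, e1} *)
Definition dG (p : pt) : R := Rmin (dist2 p e1) (dist2 p me1).

Definition jG (x y : pt) : R := ln (1 + dist2 x y / Rmin (dG x) (dG y)).

Definition partition (P : nat -> R) (n : nat) (a b : R) : Prop :=
  P 0%nat = a /\ P n = b /\ (forall i, (i < n)%nat -> P i < P (S i)).

Definition curve_cont (g : R -> pt) (a b : R) : Prop :=
  forall t, a <= t <= b -> forall eps, 0 < eps -> exists delta, 0 < delta /\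
    forall s, a <= s <= b -> Rabs (s - t) < delta -> dist2 (g s) (g t) < eps.

Fixpoint poly_len (g : R -> pt) (P : nat -> R) (n : nat) : R :=
  match n with
  | O => 0
  | S m => poly_len g P m + dist2 (g (P (S m))) (g (P m))
  end.

Definition rectifiable (g : R -> pt) (a b : R) : Prop :=
  exists M, forall P n, partition P n a b -> poly_len g P n <= M.

(* Lower sums  sum_i c_i |g(t_{i+1}) - g(t_i)|  with c_i a lower bound of
   w o g on [t_i, t_{i+1}] *)
Fixpoint wsum (c : nat -> R) (g : R -> pt) (P : nat -> R) (n : nat) : R :=
  match n with
  | O => 0
  | S m => wsum c g P m + c m * dist2 (g (P (S m))) (g (P m))
  end.

(* Line integral  int_g w ds <= M  on [0,1], for w continuous and
   g rectifiable: the integral is the supremum of such lower sums. *)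
Definition line_int_le (w : pt -> R) (g : R -> pt) (M : R) : Prop :=
  forall P n c, partition P n 0 1 ->
    (forall i, (i < n)%nat -> forall s, P i <= s <= P (S i) -> c i <= w (g s)) ->
    wsum c g P n <= M.

Definition admissible_curve (g : R -> pt) (x y : pt) : Prop :=
  curve_cont g 0 1 /\ rectifiable g 0 1 /\ g 0 = x /\ g 1 = y /\
  (forall t, 0 <= t <= 1 -> inG (g t)).

(* k_G(x,y) <= r, where k_G is the infimum over admissible curves of
   int_g |dx| / d_G(x) *)
Definition kG_le (x y : pt) (r : R) : Prop :=
  forall eps, 0 < eps -> exists g, admissible_curve g x y /\
    line_int_le (fun p => / dG p) g (r + eps).

Definition unif_const_ok (A : R) : Prop :=
  1 <= A /\ forall x y, inG x -> inG y -> kG_le x y (A * jG x y).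

(* Main.v *)
Require Import Defs.
From Stdlib Require Import Reals Lra Psatz.
Open Scope R_scope.

Lemma sq_sqrt2 u v : sqrt (u^2+v^2) * sqrt (u^2+v^2) = u^2+v^2.
Proof. apply sqrt_sqrt. nra. Qed.

Lemma sqrt2_ge0 u v : 0 <= sqrt (u^2+v^2).
Proof. apply sqrt_pos. Qed.

Lemma le_of_sq (S P : R) : 0 <= P -> S*S <= P*P -> S <= P.
Proof. intros. nra. Qed.

Lemma cauchy2 u1 u2 v1 v2 :
  u1*v1+u2*v2 <= sqrt (u1^2+u2^2) * sqrt (v1^2+v2^2).
Proof.
  apply le_of_sq. apply Rmult_le_pos; apply sqrt_pos.
  replace (sqrt (u1 ^ 2 + u2 ^ 2) * sqrt (v1 ^ 2 + v2 ^ 2) *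
   (sqrt (u1 ^ 2 + u2 ^ 2) * sqrt (v1 ^ 2 + v2 ^ 2))) with
   ((sqrt (u1 ^ 2 + u2 ^ 2) * sqrt (u1 ^ 2 + u2 ^ 2)) * (sqrt (v1 ^ 2 + v2 ^ 2) * sqrt (v1 ^ 2 + v2 ^ 2))) by ring.
  rewrite !sq_sqrt2. assert (0 <= (u1*v2-u2*v1)^2) by apply pow2_ge_0. nra.
Qed.

Lemma cross2 u1 u2 v1 v2 :
  Rabs (u1*v2-u2*v1) <= sqrt (u1^2+u2^2) * sqrt (v1^2+v2^2).
Proof.
  apply Rabs_le; split.
  - assert (H := cauchy2 u1 u2 (-v2) v1).
    replace ((-v2)^2 + v1^2) with (v1^2+v2^2) in H by ring. lra.
  - assert (H := cauchy2 u1 u2 v2 (-v1)).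
    replace (v2^2 + (-v1)^2) with (v1^2+v2^2) in H by ring. lra.
Qed.

Lemma nrm_tri u1 u2 v1 v2 :
  sqrt ((u1+v1)^2+(u2+v2)^2) <= sqrt (u1^2+u2^2) + sqrt (v1^2+v2^2).
Proof.
  apply le_of_sq. apply Rplus_le_le_0_compat; apply sqrt_pos.
  rewrite sq_sqrt2.
  assert (H := cauchy2 u1 u2 v1 v2).
  assert (H1 := sq_sqrt2 u1 u2). assert (H2 := sq_sqrt2 v1 v2). nra.
Qed.

Lemma nrm_ge_abs1 u v : Rabs u <= sqrt (u^2+v^2).
Proof.
  apply le_of_sq. apply sqrt_pos. rewrite sq_sqrt2.
  rewrite <- Rabs_mult. rewrite Rabs_right by nra. nra.
Qed.

Lemma nrm_ge_abs2 u v : Rabs v <= sqrt (u^2+v^2).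
Proof. replace (u^2+v^2) with (v^2+u^2) by ring. apply nrm_ge_abs1. Qed.

Lemma dist2_sym p q : dist2 p q = dist2 q p.
Proof. unfold dist2. f_equal. ring. Qed.

Lemma dist2_ge0 p q : 0 <= dist2 p q.
Proof. apply sqrt_pos. Qed.

Lemma dist2_tri p q r : dist2 p r <= dist2 p q + dist2 q r.
Proof.
  unfold dist2.
  replace (fst p - fst r) with ((fst p - fst q) + (fst q - fst r)) by ring.
  replace (snd p - snd r) with ((snd p - snd q) + (snd q - snd r)) by ring.
  apply nrm_tri.
Qed.

Lemma dist2_fst p q : Rabs (fst p - fst q) <= dist2 p q.
Proof. apply nrm_ge_abs1. Qed.
Lemma dist2_snd p q : Rabs (snd p - snd q) <= dist2 p q.
Proof. apply nrm_ge_abs2. Qed.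



Lemma dist2_self p : dist2 p p = 0.
Proof. unfold dist2. replace ((fst p - fst p)^2 + (snd p - snd p)^2) with 0 by ring. apply sqrt_0. Qed.

Lemma dG_lip p q : dG p <= dG q + dist2 p q.
Proof.
  unfold dG.
  assert (H1 := dist2_tri p q e1). assert (H2 := dist2_tri p q me1).
  unfold Rmin; destruct (Rle_dec (dist2 p e1) (dist2 p me1));
  destruct (Rle_dec (dist2 q e1) (dist2 q me1)); lra.
Qed.

Lemma dist2_pos p q : p <> q -> 0 < dist2 p q.
Proof.
  intros H. destruct (dist2_ge0 p q) as [|E]; auto.
  exfalso. apply H. unfold dist2 in E.
  symmetry in E. destruct p as [a b], q as [c d]; simpl in *.
  assert (E2 : (a - c) ^ 2 + (b - d) ^ 2 = 0).
  { apply sqrt_eq_0; [|exact E]. assert (0<=(a-c)^2) by apply pow2_ge_0. assert (0<=(b-d)^2) by apply pow2_ge_0. lra. }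
  assert (0<=(a-c)^2) by apply pow2_ge_0. assert (0<=(b-d)^2) by apply pow2_ge_0.
  assert (Ha : (a-c)^2 = 0) by lra. assert (Hb : (b-d)^2 = 0) by lra.
  assert (a-c=0) by (apply Rsqr_0_uniq; unfold Rsqr; lra). assert (b-d=0) by (apply Rsqr_0_uniq; unfold Rsqr; lra). f_equal; lra.
Qed.

Lemma dG_pos p : inG p -> 0 < dG p.
Proof.
  intros [H1 H2]. unfold dG. apply Rmin_pos; apply dist2_pos; auto.
Qed.

Lemma dG_le_e1 p : dG p <= dist2 p e1.
Proof. apply Rmin_l. Qed.
Lemma dG_le_me1 p : dG p <= dist2 p me1.
Proof. apply Rmin_r. Qed.

From Coquelicot Require Import Coquelicot.
Open Scope R_scope.

Lemma is_derive_arcsinh x : is_derive arcsinh x (/ sqrt (x ^ 2 + 1)).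
Proof. apply is_derive_Reals. apply derivable_pt_lim_arcsinh. Qed.

Lemma cont_of_derive f x l : is_derive f x l -> continuity_pt f x.
Proof.
  intros H. apply continuity_pt_filterlim. apply (ex_derive_continuous f x).
  exists l. exact H.
Qed.

Lemma lipseg (f df : R -> R) (B : R) :
  (forall t, 0 <= t <= 1 -> is_derive f t (df t)) ->
  (forall t, 0 <= t <= 1 -> Rabs (df t) <= B) ->
  Rabs (f 1 - f 0) <= B.
Proof.
  intros Hd Hb.
  destruct (MVT_gen f 0 1 df) as [c [Hc E]].
  - intros x Hx. rewrite Rmin_left in Hx by lra. rewrite Rmax_right in Hx by lra.
    apply Hd; lra.
  - intros x Hx. rewrite Rmin_left in Hx by lra. rewrite Rmax_right in Hx by lra.
    apply (cont_of_derive f x (df x)); apply Hd; lra.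
  - rewrite Rmin_left in Hc by lra. rewrite Rmax_right in Hc by lra.
    rewrite E. replace (df c * (1 - 0)) with (df c) by ring. apply Hb; lra.
Qed.

Lemma mono0 (f df : R -> R) :
  (forall t, 0 <= t -> is_derive f t (df t)) ->
  (forall t, 0 <= t -> 0 <= df t) ->
  forall y, 0 <= y -> f 0 <= f y.
Proof.
  intros Hd Hp y Hy. destruct Hy as [Hy|Hy]; [|subst; lra].
  destruct (MVT_gen f 0 y df) as [c [Hc E]].
  - intros x Hx. rewrite Rmin_left in Hx by lra. rewrite Rmax_right in Hx by lra.
    apply Hd; lra.
  - intros x Hx. rewrite Rmin_left in Hx by lra. rewrite Rmax_right in Hx by lra.
    apply (cont_of_derive f x (df x)); apply Hd; lra.
  - rewrite Rmin_left in Hc by lra. rewrite Rmax_right in Hc by lra.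
    assert (0 <= df c) by (apply Hp; lra). nra.
Qed.

Lemma sqrt_y2_ge1 y : 1 <= sqrt (y ^ 2 + 1).
Proof. assert (H : sqrt 1 <= sqrt (y^2+1)) by (apply sqrt_le_1_alt; nra). rewrite sqrt_1 in H; exact H. Qed.

Lemma atan_le_id u : 0 <= u -> atan u <= u.
Proof.
  intros Hu.
  assert (H := mono0 (fun t => t - atan t) (fun t => 1 - / (1 + t²))).
  cbv beta in H. rewrite atan_0 in H.
  assert (0 <= u - atan u); [|lra].
  replace 0 with (0 - 0) by ring. apply H; auto.
  - intros t _. auto_derive; [auto| unfold Rsqr; simpl; field; nra].
  - intros t _. unfold Rsqr. assert (1 <= 1 + t*t) by nra.
    assert (/ (1 + t*t) <= 1). { rewrite <- Rinv_1. apply Rinv_le_contravar; lra. } lra.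
Qed.

Lemma arcsinh_le_id y : 0 <= y -> arcsinh y <= y.
Proof.
  intros Hy.
  assert (H := mono0 (fun t => t - arcsinh t) (fun t => 1 - / sqrt (t ^ 2 + 1))).
  cbv beta in H. rewrite arcsinh_0 in H.
  assert (0 <= y - arcsinh y); [|lra].
  replace 0 with (0 - 0) by ring. apply H; auto.
  - intros t _. apply (@is_derive_minus R_AbsRing). { auto_derive; [auto|ring]. } apply is_derive_arcsinh.
  - intros t _. assert (H1 := sqrt_y2_ge1 t).
    assert (HH : / sqrt (t^2+1) <= / 1) by (apply Rinv_le_contravar; lra). rewrite Rinv_1 in HH. lra.
Qed.

Lemma atan_le_arcsinh y : 0 <= y -> atan y <= arcsinh y.
Proof.
  intros Hy.
  assert (H := mono0 (fun t => arcsinh t - atan t) (fun t => / sqrt (t ^ 2 + 1) - / (1 + t²))).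
  cbv beta in H. rewrite atan_0, arcsinh_0 in H.
  assert (0 <= arcsinh y - atan y); [|lra].
  replace 0 with (0 - 0) by ring. apply H; auto.
  - intros t _. apply (@is_derive_minus R_AbsRing).
    apply is_derive_arcsinh. apply is_derive_atan.
  - intros t _. assert (H1 := sqrt_y2_ge1 t).
    assert (sqrt (t^2+1) <= 1 + t²).
    { unfold Rsqr. assert (E : sqrt (t^2+1) * sqrt (t^2+1) = t^2+1) by (apply sqrt_sqrt; nra). nra. }
    assert (/ (1 + t²) <= / sqrt (t^2+1)) by (apply Rinv_le_contravar; lra). lra.
Qed.

Lemma Rabs_le_inv x b : Rabs x <= b -> - b <= x <= b.
Proof. unfold Rabs; destruct (Rcase_abs x); intros; lra. Qed.

Definition thR a y := PI/2 - atan ((a-1)/y).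
Definition thL a y := PI/2 - atan ((-a-1)/y).
Definition mm a y := Rmin (Rmin (thR a y) (thL a y)) (arcsinh y).

Lemma thR_lip a0 y0 a1 y1 h :
  0 < h ->
  (forall t, 0 <= t <= 1 -> 0 < y0 + t*(y1-y0)) ->
  (forall t, 0 <= t <= 1 -> h <= sqrt ((a0 + t*(a1-a0) - 1)^2 + (y0 + t*(y1-y0))^2)) ->
  Rabs (thR a1 y1 - thR a0 y0) <= sqrt ((a1-a0)^2+(y1-y0)^2) / h.
Proof.
  intros Hh Hy Hd.
  assert (H := lipseg (fun t => thR (a0 + t*(a1-a0)) (y0 + t*(y1-y0)))
    (fun t => - ((a1-a0)*(y0 + t*(y1-y0)) - (a0 + t*(a1-a0) - 1)*(y1-y0)) /
       ((y0 + t*(y1-y0))^2 + (a0 + t*(a1-a0) - 1)^2))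
    (sqrt ((a1-a0)^2+(y1-y0)^2) / h)).
  cbv beta in H. replace (a0 + 1 * (a1 - a0)) with a1 in H by ring.
  replace (y0 + 1 * (y1 - y0)) with y1 in H by ring.
  replace (a0 + 0 * (a1 - a0)) with a0 in H by ring.
  replace (y0 + 0 * (y1 - y0)) with y0 in H by ring.
  apply H; clear H.
  - intros t Ht. assert (Y := Hy t Ht). unfold thR.
    auto_derive. lra.
    set (Yt := y0 + t*(y1-y0)) in *. set (At := a0 + t*(a1-a0)) in *.
    assert (0 < Yt^2) by (apply pow_lt; lra). assert (0 <= (At-1)^2) by apply pow2_ge_0.
    field. repeat split; lra.
  - intros t Ht. assert (Y := Hy t Ht). assert (D := Hd t Ht).
    set (Yt := y0 + t*(y1-y0)) in *. set (At := a0 + t*(a1-a0)) in *.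
    set (nv := sqrt ((At - 1) ^ 2 + Yt ^ 2)) in *.
    assert (0 < Yt^2) by (apply pow_lt; lra). assert (0 <= (At-1)^2) by apply pow2_ge_0.
    assert (Enn : nv * nv = (At-1)^2 + Yt^2) by (apply sqrt_sqrt; lra).
    assert (C := cross2 (a1-a0) (y1-y0) (At-1) Yt).
    fold nv in C.
    set (nu := sqrt ((a1 - a0) ^ 2 + (y1 - y0) ^ 2)) in *.
    assert (0 <= nu) by apply sqrt_pos.
    replace (Yt ^ 2 + (At - 1) ^ 2) with (nv*nv) by lra.
    unfold Rdiv. rewrite Rabs_mult, Rabs_Ropp.
    assert (Hnv : 0 < nv) by lra.
    rewrite Rabs_inv, (Rabs_right (nv*nv)) by nra.
    replace ((a1 - a0) * Yt - (At - 1) * (y1 - y0)) with ((a1 - a0) * Yt - (y1 - y0) * (At - 1)) by ring.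
    apply Rle_trans with (nu * nv * / (nv * nv)).
    { apply Rmult_le_compat_r; [|exact C]. apply Rlt_le, Rinv_0_lt_compat; nra. }
    replace (nu * nv * / (nv * nv)) with (nu / nv) by (field; lra).
    unfold Rdiv. apply Rmult_le_compat_l; auto. apply Rinv_le_contravar; lra.
Qed.

Lemma thL_lip a0 y0 a1 y1 h :
  0 < h ->
  (forall t, 0 <= t <= 1 -> 0 < y0 + t*(y1-y0)) ->
  (forall t, 0 <= t <= 1 -> h <= sqrt ((a0 + t*(a1-a0) + 1)^2 + (y0 + t*(y1-y0))^2)) ->
  Rabs (thL a1 y1 - thL a0 y0) <= sqrt ((a1-a0)^2+(y1-y0)^2) / h.
Proof.
  intros Hh Hy Hd.
  assert (H := thR_lip (-a0) y0 (-a1) y1 h Hh Hy).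
  replace ((- a1 - - a0) ^ 2) with ((a1-a0)^2) in H by ring.
  apply H. intros t Ht.
  replace ((- a0 + t * (- a1 - - a0) - 1) ^ 2) with ((a0 + t*(a1-a0) + 1)^2) by ring.
  apply Hd; auto.
Qed.

Lemma arsh_lip a0 y0 a1 y1 h :
  0 < h ->
  (forall t, 0 <= t <= 1 -> h <= sqrt ((y0 + t*(y1-y0))^2 + 1)) ->
  Rabs (arcsinh y1 - arcsinh y0) <= sqrt ((a1-a0)^2+(y1-y0)^2) / h.
Proof.
  intros Hh Hd.
  assert (H := lipseg (fun t => arcsinh (y0 + t*(y1-y0)))
    (fun t => (y1 - y0) * / sqrt ((y0 + t*(y1-y0))^2 + 1))
    (sqrt ((a1-a0)^2+(y1-y0)^2) / h)).
  cbv beta in H. 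
  replace (y0 + 1 * (y1 - y0)) with y1 in H by ring.
  replace (y0 + 0 * (y1 - y0)) with y0 in H by ring.
  apply H; clear H.
  - intros t Ht.
    apply (is_derive_comp arcsinh (fun t => y0 + t*(y1-y0))).
    apply is_derive_arcsinh. auto_derive; [auto|ring].
  - intros t Ht. assert (D := Hd t Ht).
    assert (H1 := sqrt_y2_ge1 (y0 + t*(y1-y0))).
    rewrite Rabs_mult, Rabs_inv, (Rabs_right (sqrt _)) by lra.
    assert (A := nrm_ge_abs2 (a1-a0) (y1-y0)).
    unfold Rdiv. apply Rmult_le_compat; auto.
    apply Rabs_pos. apply Rlt_le, Rinv_0_lt_compat; lra.
    apply Rinv_le_contravar; lra.
Qed.

Lemma Rmin_lip x1 x2 y1 y2 B :
  Rabs (x1 - y1) <= B -> Rabs (x2 - y2) <= B -> Rabs (Rmin x1 x2 - Rmin y1 y2) <= B.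
Proof.
  intros H1 H2. apply Rabs_le. apply Rabs_le_inv in H1. apply Rabs_le_inv in H2.
  unfold Rmin; destruct (Rle_dec x1 x2); destruct (Rle_dec y1 y2); lra.
Qed.

Lemma thR_far a y : 0 < y -> 2 <= a -> thR a y <= arcsinh y.
Proof.
  intros Hy Ha. unfold thR.
  rewrite <- atan_inv by (apply Rdiv_lt_0_compat; lra).
  replace (/ ((a - 1) / y)) with (y / (a-1)) by (field; lra).
  apply Rle_trans with (atan y).
  - assert (y / (a-1) <= y).
    { unfold Rdiv. replace y with (y * 1) at 2 by ring. apply Rmult_le_compat_l; [lra|].
      replace 1 with (/1) by apply Rinv_1. apply Rinv_le_contravar; lra. }
    destruct H. left; apply atan_increasing; auto. rewrite H; lra.
  - apply atan_le_arcsinh; lra.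
Qed.

Lemma mm_far a y : 0 < y -> (2 <= a \/ a <= -2) -> mm a y = Rmin (thR a y) (thL a y).
Proof.
  intros Hy Ha. unfold mm. apply Rmin_left.
  destruct Ha as [Ha|Ha].
  - apply Rle_trans with (thR a y). apply Rmin_l. apply thR_far; auto.
  - apply Rle_trans with (thL a y). apply Rmin_r. unfold thL.
    change (thR (-a) y <= arcsinh y). apply thR_far; lra.
Qed.

Lemma dist2_pair a0 y0 a1 y1 : dist2 (a0,y0) (a1,y1) = sqrt ((a1-a0)^2+(y1-y0)^2).
Proof. unfold dist2; simpl. f_equal. ring. Qed.

Lemma segdist a0 y0 a1 y1 t : 0 <= t ->
  dist2 (a0,y0) (a0 + t*(a1-a0), y0 + t*(y1-y0)) = t * dist2 (a0,y0) (a1,y1).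
Proof.
  intros Ht. rewrite !dist2_pair.
  replace ((a0 + t * (a1 - a0) - a0) ^ 2 + (y0 + t * (y1 - y0) - y0) ^ 2)
    with (t^2 * ((a1 - a0) ^ 2 + (y1 - y0) ^ 2)) by ring.
  rewrite sqrt_mult_alt by (apply pow2_ge_0). rewrite sqrt_pow2 by lra. ring.
Qed.

Lemma segdist2 a0 y0 a1 y1 t : t <= 1 ->
  dist2 (a0 + t*(a1-a0), y0 + t*(y1-y0)) (a1,y1) = (1-t) * dist2 (a0,y0) (a1,y1).
Proof.
  intros Ht. rewrite !dist2_pair.
  replace ((a1 - (a0 + t * (a1 - a0))) ^ 2 + (y1 - (y0 + t * (y1 - y0))) ^ 2)
    with ((1-t)^2 * ((a1 - a0) ^ 2 + (y1 - y0) ^ 2)) by ring.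
  rewrite sqrt_mult_alt by (apply pow2_ge_0). rewrite sqrt_pow2 by lra. ring.
Qed.

Lemma sqrt_y2_lip u v : sqrt (v^2+1) <= sqrt (u^2+1) + Rabs (v - u).
Proof.
  assert (H := nrm_tri u 1 (v-u) 0).
  replace ((u + (v - u)) ^ 2 + (1 + 0) ^ 2) with (v^2+1) in H by ring.
  replace (u^2 + 1^2) with (u^2+1) in H by ring.
  replace ((v - u) ^ 2 + 0 ^ 2) with (Rsqr (v-u)) in H by (unfold Rsqr; ring).
  rewrite sqrt_Rsqr_abs in H. exact H.
Qed.

Lemma UL a0 y0 a1 y1 rho :
  0 < y0 -> 0 < y1 -> 0 < rho -> rho < 1/3 -> 0 < dG (a0,y0) ->
  dist2 (a0,y0) (a1,y1) <= rho * dG (a0,y0) ->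
  Rabs (mm a0 y0 - mm a1 y1) <= dist2 (a0,y0) (a1,y1) / ((1-3*rho) * dG (a0,y0)).
Proof.
  intros Hy0 Hy1 Hr0 Hr1 Hd HD.
  set (d := dG (a0,y0)) in *. set (D := dist2 (a0,y0) (a1,y1)) in *.
  assert (HD0 : 0 <= D) by apply dist2_ge0.
  assert (ED : D = sqrt ((a1-a0)^2+(y1-y0)^2)) by apply dist2_pair.
  assert (Hy : forall t, 0 <= t <= 1 -> 0 < y0 + t*(y1-y0)) by (intros; nra).
  assert (Hw : forall t, 0 <= t <= 1 -> (1-rho)*d <= dG (a0 + t*(a1-a0), y0 + t*(y1-y0))).
  { intros t Ht. assert (L := dG_lip (a0,y0) (a0 + t*(a1-a0), y0 + t*(y1-y0))).
    rewrite segdist in L by lra. fold d D in L. nra. }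
  assert (He1 : forall t, 0 <= t <= 1 -> (1-rho)*d <= sqrt ((a0 + t*(a1-a0) - 1)^2 + (y0 + t*(y1-y0))^2)).
  { intros t Ht. assert (L := dG_le_e1 (a0 + t*(a1-a0), y0 + t*(y1-y0))).
    unfold dist2, e1 in L; cbn [fst snd] in L. replace (y0 + t * (y1 - y0) - 0) with (y0 + t * (y1 - y0)) in L by ring.
    assert (W := Hw t Ht). lra. }
  assert (Hme1 : forall t, 0 <= t <= 1 -> (1-rho)*d <= sqrt ((a0 + t*(a1-a0) + 1)^2 + (y0 + t*(y1-y0))^2)).
  { intros t Ht. assert (L := dG_le_me1 (a0 + t*(a1-a0), y0 + t*(y1-y0))).
    unfold dist2, me1 in L; cbn [fst snd] in L. replace (y0 + t * (y1 - y0) - 0) with (y0 + t * (y1 - y0)) in L by ring.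
    replace (a0 + t * (a1 - a0) - -1) with (a0 + t * (a1 - a0) + 1) in L by ring.
    assert (W := Hw t Ht). lra. }
  assert (Hh1 : 0 < (1-rho)*d) by nra.
  assert (Hh3 : 0 < (1-3*rho)*d) by nra.
  assert (K : D / ((1-rho)*d) <= D / ((1-3*rho)*d)).
  { unfold Rdiv. apply Rmult_le_compat_l; auto. apply Rinv_le_contravar; nra. }
  assert (BR : Rabs (thR a0 y0 - thR a1 y1) <= D / ((1-3*rho)*d)).
  { rewrite Rabs_minus_sym. eapply Rle_trans; [|exact K]. rewrite ED. apply thR_lip; auto. }
  assert (BL : Rabs (thL a0 y0 - thL a1 y1) <= D / ((1-3*rho)*d)).
  { rewrite Rabs_minus_sym. eapply Rle_trans; [|exact K]. rewrite ED. apply thL_lip; auto. }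
  assert (Cases : (exists t0, 0 <= t0 <= 1 /\ -2 <= a0 + t0*(a1-a0) <= 2) \/
                  ((2 <= a0 /\ 2 <= a1) \/ (a0 <= -2 /\ a1 <= -2))).
  { destruct (Rle_dec (-2) a0); destruct (Rle_dec a0 2).
    - left. exists 0. split; lra.
    - destruct (Rle_dec (-2) a1); destruct (Rle_dec a1 2).
      + left. exists 1. split; lra.
      + right; left; lra.
      + left. exists (a0/(a0-a1)). split.
        * split; apply Rmult_le_reg_r with (a0 - a1); try lra; unfold Rdiv;
          rewrite Rmult_assoc, Rinv_l by lra; lra.
        * replace (a0 + a0 / (a0 - a1) * (a1 - a0)) with 0 by (field; lra). lra.
      + lra.
    - destruct (Rle_dec (-2) a1); destruct (Rle_dec a1 2).
      + left. exists 1. split; lra.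
      + left. exists (a0/(a0-a1)). split.
        * split; apply Rmult_le_reg_r with (a1 - a0); try lra; unfold Rdiv;
          replace (a0 * / (a0 - a1) * (a1 - a0)) with (- a0) by (field; lra); lra.
        * replace (a0 + a0 / (a0 - a1) * (a1 - a0)) with 0 by (field; lra). lra.
      + right; right; lra.
      + lra.
    - lra. }
  destruct Cases as [[t0 [Ht0 Ha0]] | Far].
  - (* arcsinh is usable *)
    assert (Hs : forall t, 0 <= t <= 1 -> (1-3*rho)*d <= sqrt ((y0 + t*(y1-y0))^2 + 1)).
    { intros t Ht.
      assert (W := Hw t0 Ht0).
      set (A0 := a0 + t0*(a1-a0)) in *. set (Y0 := y0 + t0*(y1-y0)) in *.
      assert (U : dG (A0, Y0) <= sqrt (Y0^2 + 1)).
      { destruct (Rle_dec 0 A0).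
        - eapply Rle_trans. apply dG_le_e1. unfold dist2, e1; cbn [fst snd].
          apply sqrt_le_1_alt. nra.
        - eapply Rle_trans. apply dG_le_me1. unfold dist2, me1; cbn [fst snd].
          apply sqrt_le_1_alt. nra. }
      assert (V := sqrt_y2_lip (y0 + t*(y1-y0)) Y0).
      assert (Rabs (Y0 - (y0 + t * (y1 - y0))) <= D).
      { unfold Y0. replace (y0 + t0 * (y1 - y0) - (y0 + t * (y1 - y0))) with ((t0 - t)*(y1-y0)) by ring.
        rewrite Rabs_mult. rewrite ED. eapply Rle_trans; [|apply nrm_ge_abs2].
        replace (Rabs (y1 - y0)) with (1 * Rabs (y1-y0)) at 2 by ring.
        apply Rmult_le_compat_r. apply Rabs_pos. apply Rabs_le. lra. }
      nra. }
    assert (BS : Rabs (arcsinh y0 - arcsinh y1) <= D / ((1-3*rho)*d)).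
    { rewrite Rabs_minus_sym. rewrite ED. apply arsh_lip; auto. }
    unfold mm. apply Rmin_lip; [apply Rmin_lip|]; auto.
  - rewrite (mm_far a0 y0), (mm_far a1 y1) by (auto; lra).
    apply Rmin_lip; auto.
Qed.

Definition psi (p : pt) : R :=
  if Rlt_dec 0 (snd p) then mm (fst p) (snd p)
  else if Rlt_dec (snd p) 0 then - mm (fst p) (- snd p) else 0.

Lemma psi_pos a y : 0 < y -> psi (a,y) = mm a y.
Proof. intros H. unfold psi; cbn [fst snd]. destruct (Rlt_dec 0 y); [auto|lra]. Qed.
Lemma psi_neg a y : y < 0 -> psi (a,y) = - mm a (-y).
Proof. intros H. unfold psi; cbn [fst snd]. destruct (Rlt_dec 0 y); [lra|].
  destruct (Rlt_dec y 0); [auto|lra]. Qed.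
Lemma psi_zero a : psi (a,0) = 0.
Proof. unfold psi; cbn [fst snd]. destruct (Rlt_dec 0 0); [lra|].
  destruct (Rlt_dec 0 0); [lra|auto]. Qed.

Lemma thR_atan a y : 1 < a -> 0 < y -> thR a y = atan (y / (a-1)).
Proof.
  intros Ha Hy. unfold thR.
  rewrite <- atan_inv by (apply Rdiv_lt_0_compat; lra).
  f_equal. field; lra.
Qed.

Lemma thR_pos a y : 0 < thR a y.
Proof. unfold thR. destruct (atan_bound ((a-1)/y)). lra. Qed.

Lemma mm_pos a y : 0 < y -> 0 < mm a y.
Proof.
  intros Hy. unfold mm. assert (0 < arcsinh y) by (rewrite <- arcsinh_0; apply arcsinh_lt; auto).
  assert (0 < thR a y) by apply thR_pos. assert (0 < thL a y) by apply (thR_pos (-a) y).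
  apply Rmin_pos; auto. apply Rmin_pos; auto.
Qed.

Lemma div_le_aux x y k : 0 <= x -> x <= y -> 0 < k -> k <= 1 -> x <= y / k.
Proof.
  intros. assert (/1 <= /k) by (apply Rinv_le_contravar; lra). rewrite Rinv_1 in H3.
  unfold Rdiv. nra.
Qed.

Lemma div_le_aux2 x y u k : 0 <= x -> x <= y -> 0 < k -> k <= u -> x / u <= y / k.
Proof.
  intros. unfold Rdiv. apply Rmult_le_compat; auto.
  apply Rlt_le, Rinv_0_lt_compat; lra. apply Rinv_le_contravar; lra.
Qed.

Lemma CL z ap yp ar rho :
  0 < yp -> 0 < rho -> rho < 1/3 -> 0 < dG z ->
  dist2 z (ap,yp) <= rho * dG z -> dist2 z (ar,0) <= rho * dG z ->
  mm ap yp <= dist2 (ap,yp) (ar,0) / ((1-3*rho) * dG z).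
Proof.
  intros Hy Hr0 Hr1 Hd Hp Hq.
  set (d := dG z) in *. set (Dpr := dist2 (ap,yp) (ar,0)).
  assert (Hr : (1-rho)*d <= dG (ar,0)).
  { assert (L := dG_lip z (ar,0)). fold d in L. lra. }
  assert (HD : Dpr <= 2*rho*d).
  { assert (T := dist2_tri (ap,yp) z (ar,0)). rewrite (dist2_sym (ap,yp) z) in T. fold Dpr in T. lra. }
  assert (Hyp : yp <= Dpr).
  { unfold Dpr. rewrite dist2_pair. eapply Rle_trans; [|apply nrm_ge_abs2].
    rewrite Rabs_left by lra. lra. }
  assert (Hap : Rabs (ar - ap) <= Dpr).
  { unfold Dpr. rewrite dist2_pair. apply nrm_ge_abs1. }
  apply Rabs_le_inv in Hap.
  assert (Hk : 0 < (1-3*rho)*d) by nra.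
  assert (HD0 : 0 <= Dpr) by apply dist2_ge0.
  assert (Hrd : 0 < rho * d) by (apply Rmult_lt_0_compat; lra).
  destruct (Rle_dec ar 2); destruct (Rle_dec (-2) ar).
  -
    assert (dG (ar,0) <= 1).
    { destruct (Rle_dec 0 ar).
      - eapply Rle_trans. apply dG_le_e1. unfold dist2, e1; cbn [fst snd].
        apply Rle_trans with (sqrt 1); [apply sqrt_le_1_alt; nra | rewrite sqrt_1; lra].
      - eapply Rle_trans. apply dG_le_me1. unfold dist2, me1; cbn [fst snd].
        apply Rle_trans with (sqrt 1); [apply sqrt_le_1_alt; nra | rewrite sqrt_1; lra]. }
    apply Rle_trans with (arcsinh yp). apply Rmin_r.
    apply Rle_trans with yp. apply arcsinh_le_id; lra.
    apply div_le_aux; auto; try lra.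
  -
    assert (dG (ar,0) <= -ar-1).
    { eapply Rle_trans. apply dG_le_me1. unfold dist2, me1; cbn [fst snd].
      replace ((ar - -1) ^ 2 + (0 - 0) ^ 2) with ((-ar-1)^2) by ring.
      rewrite sqrt_pow2 by lra. lra. }
    apply Rle_trans with (thL ap yp). eapply Rle_trans; [apply Rmin_l|apply Rmin_r].
    unfold thL. change (thR (-ap) yp <= Dpr / ((1 - 3 * rho) * d)).
    rewrite thR_atan by (auto; nra).
    eapply Rle_trans. apply atan_le_id. apply Rlt_le, Rdiv_lt_0_compat; nra.
    apply div_le_aux2; try lra.
  -
    assert (dG (ar,0) <= ar-1).
    { eapply Rle_trans. apply dG_le_e1. unfold dist2, e1; cbn [fst snd].
      replace ((ar - 1) ^ 2 + (0 - 0) ^ 2) with ((ar-1)^2) by ring.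
      rewrite sqrt_pow2 by lra. lra. }
    apply Rle_trans with (thR ap yp). eapply Rle_trans; [apply Rmin_l|apply Rmin_l].
    rewrite thR_atan by (auto; nra).
    eapply Rle_trans. apply atan_le_id. apply Rlt_le, Rdiv_lt_0_compat; nra.
    apply div_le_aux2; try lra.
  - lra.
Qed.

Lemma dG_refl a y : dG (a,-y) = dG (a,y).
Proof. unfold dG, dist2, e1, me1; cbn [fst snd].
  replace ((-y - 0)^2) with ((y-0)^2) by ring. reflexivity. Qed.

Lemma dist2_refl a0 y0 a1 y1 : dist2 (a0,-y0) (a1,-y1) = dist2 (a0,y0) (a1,y1).
Proof. unfold dist2; cbn [fst snd]. f_equal. ring. Qed.

Lemma psi_cross z ap yp ar rho :
  0 < rho -> rho < 1/3 -> 0 < dG z ->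
  dist2 z (ap,yp) <= rho * dG z -> dist2 z (ar,0) <= rho * dG z ->
  Rabs (psi (ap,yp)) <= dist2 (ap,yp) (ar,0) / ((1-3*rho) * dG z).
Proof.
  intros Hr0 Hr1 Hd Hp Hq.
  assert (Hk : 0 < (1-3*rho) * dG z) by nra.
  destruct (Rlt_dec 0 yp).
  - rewrite psi_pos by auto. rewrite Rabs_right by (apply Rle_ge, Rlt_le, mm_pos; auto).
    apply CL; auto.
  - destruct (Rlt_dec yp 0).
    + rewrite psi_neg by auto. rewrite Rabs_Ropp.
      rewrite Rabs_right by (apply Rle_ge, Rlt_le, mm_pos; lra).
      destruct z as [a0 y0].
      rewrite <- (dist2_refl ap yp ar 0). replace (-0) with 0 by ring.
      rewrite <- dG_refl.
      rewrite <- dG_refl in Hd.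
      apply CL; try lra.
      * rewrite dist2_refl. rewrite dG_refl. exact Hp.
      * replace (ar,0) with (ar,-0) by (f_equal; ring). rewrite dist2_refl. rewrite dG_refl. exact Hq.
    + replace yp with 0 by lra. rewrite psi_zero, Rabs_R0.
      apply Rmult_le_pos. apply dist2_ge0. apply Rlt_le, Rinv_0_lt_compat; auto.
Qed.

Lemma abs_sub_le a b : Rabs (a - b) <= Rabs a + Rabs b.
Proof.
  apply Rabs_le. assert (H1 := Rabs_le_inv a (Rabs a) (Rle_refl _)).
  assert (H2 := Rabs_le_inv b (Rabs b) (Rle_refl _)). lra.
Qed.

Lemma ML_cross a0 y0 a1 y1 rho :
  0 < rho -> rho < 1/3 -> 0 < dG (a0,y0) -> dist2 (a0,y0) (a1,y1) <= rho * dG (a0,y0) ->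
  ((y0 <= 0 <= y1) \/ (y1 <= 0 <= y0)) ->
  Rabs (psi (a0,y0) - psi (a1,y1)) <= dist2 (a0,y0) (a1,y1) / ((1-3*rho) * dG (a0,y0)).
Proof.
  intros Hr0 Hr1 Hd HD Hs.
  set (d := dG (a0,y0)) in *. set (D := dist2 (a0,y0) (a1,y1)) in *.
  assert (Hk : 0 < (1-3*rho) * d) by nra.
  assert (HD0 : 0 <= D) by apply dist2_ge0.
  destruct (Req_dec y0 y1) as [E|NE].
  - assert (y0 = 0) by lra. subst y1. subst y0. rewrite !psi_zero, Rminus_0_r, Rabs_R0.
    apply Rmult_le_pos; auto. apply Rlt_le, Rinv_0_lt_compat; auto.
  - set (t := y0/(y0-y1)).
    assert (Ht : 0 <= t <= 1).
    { unfold t. destruct Hs as [Hs|Hs].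
      - split; apply Rmult_le_reg_r with (y1 - y0); try lra; unfold Rdiv;
          replace (y0 * / (y0 - y1) * (y1 - y0)) with (- y0) by (field; lra); lra.
      - split; apply Rmult_le_reg_r with (y0 - y1); try lra; unfold Rdiv;
          rewrite Rmult_assoc, Rinv_l by lra; lra. }
    set (ar := a0 + t*(a1-a0)).
    assert (Er : (ar, 0) = (a0 + t*(a1-a0), y0 + t*(y1-y0))).
    { f_equal. unfold t. field. lra. }
    assert (D1 : dist2 (a0,y0) (ar,0) = t * D) by (rewrite Er; apply segdist; lra).
    assert (D2 : dist2 (a1,y1) (ar,0) = (1-t) * D)
      by (rewrite dist2_sym, Er; apply segdist2; lra).
    assert (Z : dist2 (a0,y0) (a0,y0) <= rho * d) by (rewrite dist2_self; nra).
    assert (Q : dist2 (a0,y0) (ar,0) <= rho * d) by (rewrite D1; nra).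
    assert (P1 := psi_cross (a0,y0) a0 y0 ar rho Hr0 Hr1 Hd Z Q).
    assert (P2 := psi_cross (a0,y0) a1 y1 ar rho Hr0 Hr1 Hd HD Q).
    fold d in P1, P2. rewrite D1 in P1. rewrite D2 in P2.
    eapply Rle_trans. apply abs_sub_le.
    replace (D / ((1 - 3 * rho) * d)) with (t * D / ((1 - 3 * rho) * d) + (1 - t) * D / ((1 - 3 * rho) * d))
      by (field; lra).
    lra.
Qed.

Lemma ML z q rho :
  0 < rho -> rho < 1/3 -> 0 < dG z -> dist2 z q <= rho * dG z ->
  Rabs (psi z - psi q) <= dist2 z q / ((1-3*rho) * dG z).
Proof.
  intros Hr0 Hr1 Hd HD.
  destruct z as [a0 y0], q as [a1 y1].
  destruct (Rlt_dec 0 y0); destruct (Rlt_dec 0 y1).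
  - rewrite !psi_pos by auto. apply UL; auto.
  - apply ML_cross; auto; lra.
  - apply ML_cross; auto; lra.
  - destruct (Rlt_dec y0 0); destruct (Rlt_dec y1 0).
    + rewrite !psi_neg by auto.
      replace (- mm a0 (- y0) - - mm a1 (- y1)) with (- (mm a0 (- y0) - mm a1 (- y1))) by ring.
      rewrite Rabs_Ropp. rewrite <- dist2_refl, <- dG_refl. rewrite <- dG_refl in Hd.
      rewrite <- dist2_refl, <- dG_refl in HD.
      apply UL; auto; lra.
    + apply ML_cross; auto; lra.
    + apply ML_cross; auto; lra.
    + apply ML_cross; auto; lra.
Qed.

Lemma dist2_le_sum p q : dist2 p q <= Rabs (fst p - fst q) + Rabs (snd p - snd q).
Proof.
  unfold dist2. apply le_of_sq. apply Rplus_le_le_0_compat; apply Rabs_pos.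
  rewrite sq_sqrt2.
  assert (H1 := Rabs_pos (fst p - fst q)). assert (H2 := Rabs_pos (snd p - snd q)).
  rewrite <- (pow2_abs (fst p - fst q)), <- (pow2_abs (snd p - snd q)). nra.
Qed.

Definition clamp t := Rmax 0 (Rmin 1 t).
Lemma clamp_in t : 0 <= clamp t <= 1.
Proof. unfold clamp, Rmax, Rmin. destruct (Rle_dec 1 t); repeat match goal with |- context [Rle_dec ?a ?b] => destruct (Rle_dec a b) end; lra. Qed.
Lemma clamp_id t : 0 <= t <= 1 -> clamp t = t.
Proof. intros. unfold clamp, Rmax, Rmin. destruct (Rle_dec 1 t); repeat match goal with |- context [Rle_dec ?a ?b] => destruct (Rle_dec a b) end; lra. Qed.
Lemma clamp_lip s t : Rabs (clamp s - clamp t) <= Rabs (s - t).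
Proof.
  unfold clamp, Rmax, Rmin.
  destruct (Rle_dec 1 s); destruct (Rle_dec 1 t); repeat match goal with |- context [Rle_dec ?a ?b] => destruct (Rle_dec a b) end; unfold Rabs; repeat match goal with |- context [Rcase_abs ?x] => destruct (Rcase_abs x) end; lra.
Qed.

Lemma cont_eps F t :
  (forall eps, 0 < eps -> exists delta, 0 < delta /\ forall s, Rabs (s - t) < delta -> Rabs (F s - F t) < eps) ->
  continuity_pt F t.
Proof.
  intros H. unfold continuity_pt, continue_in, limit1_in, limit_in. simpl. unfold R_dist. intros eps Heps.
  destruct (H eps Heps) as [d [Hd Hs]]. exists d. split; auto. intros s [_ Hs2]. apply Hs; auto.
Qed.

Lemma cc_clamp g t : curve_cont g 0 1 -> forall eps, 0 < eps ->
  exists delta, 0 < delta /\ forall s, Rabs (s - t) < delta -> dist2 (g (clamp s)) (g (clamp t)) < eps.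
Proof.
  intros Hc eps He. destruct (Hc (clamp t) (clamp_in t) eps He) as [d [Hd Hs]].
  exists d. split; auto. intros s Hst. apply Hs. apply clamp_in.
  eapply Rle_lt_trans. apply clamp_lip. auto.
Qed.

Lemma fine g rho :
  curve_cont g 0 1 -> (forall t, 0 <= t <= 1 -> inG (g t)) -> 0 < rho ->
  exists N, (0 < N)%nat /\ forall i, (i < N)%nat -> forall s, INR i / INR N <= s <= INR (S i) / INR N ->
    dist2 (g (INR i / INR N)) (g s) <= rho * dG (g (INR i / INR N)).
Proof.
  intros Hc HG Hr.
  set (X := fun t => fst (g (clamp t))). set (Y := fun t => snd (g (clamp t))).
  set (Df := fun t => dG (g (clamp t))).
  assert (CX : forall t, continuity_pt X t).
  { intros t. apply cont_eps. intros eps He. destruct (cc_clamp g t Hc eps He) as [d [Hd Hs]].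
    exists d; split; auto. intros s Hst. eapply Rle_lt_trans; [apply dist2_fst|]. apply Hs; auto. }
  assert (CY : forall t, continuity_pt Y t).
  { intros t. apply cont_eps. intros eps He. destruct (cc_clamp g t Hc eps He) as [d [Hd Hs]].
    exists d; split; auto. intros s Hst. eapply Rle_lt_trans; [apply dist2_snd|]. apply Hs; auto. }
  assert (CD : forall t, continuity_pt Df t).
  { intros t. apply cont_eps. intros eps He. destruct (cc_clamp g t Hc eps He) as [d [Hd Hs]].
    exists d; split; auto. intros s Hst. assert (S1 := Hs s Hst).
    assert (L1 := dG_lip (g (clamp s)) (g (clamp t))).
    assert (L2 := dG_lip (g (clamp t)) (g (clamp s))). rewrite dist2_sym in L2.
    unfold Df. apply Rabs_def1; lra. }
  destruct (continuity_ab_min Df 0 1) as [t0 [Hmin Ht0]]. lra. intros; apply CD.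
  set (dm := Df t0).
  assert (Hdm : 0 < dm). { unfold dm, Df. apply dG_pos. apply HG. apply clamp_in. }
  assert (He : 0 < rho * dm / 2) by (apply Rmult_lt_0_compat; [nra|lra]).
  destruct (Heine X (fun c => 0 <= c <= 1) (compact_P3 0 1) (fun x _ => CX x) (mkposreal _ He)) as [dx Hx].
  destruct (Heine Y (fun c => 0 <= c <= 1) (compact_P3 0 1) (fun x _ => CY x) (mkposreal _ He)) as [dy Hy].
  assert (Hdel : 0 < Rmin dx dy) by (apply Rmin_pos; apply cond_pos).
  destruct (archimed_cor1 _ Hdel) as [N [HN HN0]].
  exists N. split; auto.
  intros i Hi s Hs.
  assert (HNr : 0 < INR N) by (apply lt_0_INR; auto).
  assert (Hi1 : INR (S i) <= INR N) by (apply le_INR; lia).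
  assert (Hi0 : 0 <= INR i) by apply pos_INR.
  rewrite S_INR in Hs, Hi1.
  set (u := INR i / INR N) in *.
  assert (Hu : 0 <= u <= 1).
  { unfold u. split. apply Rmult_le_pos; auto. apply Rlt_le, Rinv_0_lt_compat; auto.
    apply Rmult_le_reg_r with (INR N); auto. unfold Rdiv. rewrite Rmult_assoc, Rinv_l by lra. lra. }
  assert (Hs1 : s <= 1).
  { eapply Rle_trans. apply Hs. apply Rmult_le_reg_r with (INR N); auto. unfold Rdiv.
    rewrite Rmult_assoc, Rinv_l by lra. lra. }
  assert (Hsu : Rabs (u - s) < Rmin dx dy).
  { rewrite Rabs_minus_sym. rewrite Rabs_right by lra. eapply Rle_lt_trans; [|exact HN].
    replace (/ INR N) with ((INR i + 1) / INR N - u) by (unfold u; field; lra). lra. }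
  assert (A1 := Hx u s Hu (conj (Rle_trans _ _ _ (proj1 Hu) (proj1 Hs)) Hs1)
                  (Rlt_le_trans _ _ _ Hsu (Rmin_l _ _))).
  assert (A2 := Hy u s Hu (conj (Rle_trans _ _ _ (proj1 Hu) (proj1 Hs)) Hs1)
                  (Rlt_le_trans _ _ _ Hsu (Rmin_r _ _))).
  simpl in A1, A2. unfold X, Y in A1, A2.
  rewrite (clamp_id u Hu) in A1, A2.
  rewrite (clamp_id s) in A1, A2 by (split; [apply Rle_trans with u; lra|lra]).
  assert (M := Hmin u Hu). unfold Df in M. rewrite (clamp_id u Hu) in M. fold dm in M.
  change (dm <= dG (g u)) in M.
  assert (rho * dm <= rho * dG (g u)) by (apply Rmult_le_compat_l; lra).
  eapply Rle_trans. apply dist2_le_sum. lra.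
Qed.

Lemma curve_bound g x y M rho :
  admissible_curve g x y -> line_int_le (fun p => / dG p) g M -> 0 < rho -> rho < 1/3 ->
  (1-3*rho)/(1+rho) * (psi x - psi y) <= M.
Proof.
  intros [Hc [_ [Hg0 [Hg1 HG]]]] HL Hr0 Hr1.
  destruct (fine g rho Hc HG Hr0) as [N [HN Hf]].
  set (P := fun i : nat => INR i / INR N).
  set (c := fun i : nat => / ((1+rho) * dG (g (P i)))).
  assert (HNr : 0 < INR N) by (apply lt_0_INR; auto).
  assert (HPin : forall i, (i <= N)%nat -> 0 <= P i <= 1).
  { intros i Hi. unfold P. assert (INR i <= INR N) by (apply le_INR; auto).
    assert (0 <= INR i) by apply pos_INR. split.
    apply Rmult_le_pos; auto. apply Rlt_le, Rinv_0_lt_compat; auto.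
    apply Rmult_le_reg_r with (INR N); auto. unfold Rdiv. rewrite Rmult_assoc, Rinv_l by lra. lra. }
  assert (Hpart : partition P N 0 1).
  { split; [|split].
    - unfold P. simpl. unfold Rdiv. ring.
    - unfold P. field. lra.
    - intros i Hi. unfold P. rewrite S_INR. unfold Rdiv. apply Rmult_lt_compat_r.
      apply Rinv_0_lt_compat; auto. lra. }
  assert (Hcv : forall i, (i < N)%nat -> forall s, P i <= s <= P (S i) -> c i <= / dG (g s)).
  { intros i Hi s Hs. unfold c.
    assert (Hi0 := HPin i ltac:(lia)). assert (Hi1 := HPin (S i) ltac:(lia)).
    assert (Hgs : 0 < dG (g s)) by (apply dG_pos, HG; lra).
    assert (Hd := Hf i Hi s Hs). fold (P i) in Hd.
    assert (L := dG_lip (g s) (g (P i))). rewrite dist2_sym in L.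
    apply Rinv_le_contravar; auto. lra. }
  assert (HW := HL P N c Hpart Hcv).
  set (k := (1-3*rho)/(1+rho)).
  assert (Ind : forall n, (n <= N)%nat -> k * (psi (g (P 0%nat)) - psi (g (P n))) <= wsum c g P n).
  { induction n as [|n IH]; intros Hn.
    - cbn [wsum]. unfold Rminus. rewrite Rplus_opp_r, Rmult_0_r. lra.
    - simpl wsum. assert (IH' := IH ltac:(lia)).
      assert (Hi0 := HPin n ltac:(lia)).
      set (z := g (P n)) in *. set (q := g (P (S n))).
      assert (Hdz : 0 < dG z) by (apply dG_pos, HG; auto).
      assert (Hzq : dist2 z q <= rho * dG z).
      { apply (Hf n ltac:(lia)). unfold P. rewrite S_INR. split; unfold Rdiv; apply Rmult_le_compat_r;
          try (apply Rlt_le, Rinv_0_lt_compat; auto); lra. }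
      assert (B := ML z q rho Hr0 Hr1 Hdz Hzq).
      assert (Hk : 0 <= k) by (unfold k; apply Rmult_le_pos; [lra|apply Rlt_le, Rinv_0_lt_compat; lra]).
      assert (T : k * (psi z - psi q) <= c n * dist2 q z).
      { rewrite dist2_sym. unfold c. fold z.
        apply Rle_trans with (k * (dist2 z q / ((1 - 3 * rho) * dG z))).
        - apply Rmult_le_compat_l; auto. eapply Rle_trans; [apply Rle_abs|exact B].
        - unfold k. right. field. split; lra. }
      lra. }
  assert (F := Ind N (le_n N)).
  assert (E0 : P 0%nat = 0) by apply Hpart. assert (E1 : P N = 1) by apply Hpart.
  rewrite E0, E1, Hg0, Hg1 in F. fold k. lra.
Qed.

Lemma psi_top beta : 0 < beta -> arcsinh beta + atan beta = PI -> psi (0,beta) = arcsinh beta.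
Proof.
  intros Hb Hh. rewrite psi_pos by auto.
  assert (E : thR 0 beta = arcsinh beta).
  { unfold thR. replace ((0-1)/beta) with (- / beta) by (field; lra).
    rewrite atan_opp, atan_inv by auto. lra. }
  assert (E2 : thL 0 beta = arcsinh beta).
  { unfold thL. replace ((-0-1)/beta) with (- / beta) by (field; lra).
    rewrite atan_opp, atan_inv by auto. lra. }
  unfold mm. rewrite E, E2. rewrite (Rmin_left (arcsinh beta) (arcsinh beta)) by lra. rewrite Rmin_left by lra. reflexivity.
Qed.

Lemma psi_bot beta : 0 < beta -> arcsinh beta + atan beta = PI -> psi (0,-beta) = - arcsinh beta.
Proof.
  intros Hb Hh. rewrite psi_neg by lra. rewrite Ropp_involutive.
  rewrite <- psi_pos with (a:=0) by auto. rewrite psi_top; auto.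
Qed.

Lemma limit_rho C M : 0 < C ->
  (forall rho, 0 < rho -> rho < 1/3 -> (1-3*rho)/(1+rho) * C <= M) -> C <= M.
Proof.
  intros HC H.
  assert (M0 : 0 < M).
  { assert (H1 := H (1/4) ltac:(lra) ltac:(lra)).
    replace ((1 - 3 * (1/4)) / (1 + 1/4)) with (1/5) in H1 by field. lra. }
  destruct (Rle_dec C M) as [|N]; auto. exfalso.
  set (rho := (C - M) / (2 * (3*C + M))).
  assert (Hr0 : 0 < rho) by (unfold rho; apply Rdiv_lt_0_compat; lra).
  assert (E : C - M = 2 * rho * (3*C+M)) by (unfold rho; field; lra).
  assert (Hr1 : rho < 1/3) by nra.
  assert (H1 := H rho Hr0 Hr1).
  assert (H2 : M * (1 + rho) < (1 - 3*rho) * C) by nra.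
  assert (H3 : (1 - 3 * rho) / (1 + rho) * C = (1 - 3*rho) * C / (1+rho)) by (field; lra).
  rewrite H3 in H1.
  apply Rmult_le_compat_r with (r := 1 + rho) in H1; [|lra].
  replace ((1 - 3 * rho) * C / (1 + rho) * (1 + rho)) with ((1 - 3*rho)*C) in H1 by (field; lra).
  lra.
Qed.

Theorem mainTheorem19 (beta : R) :
  0 < beta -> arcsinh beta + atan beta = PI ->
  forall A, unif_const_ok A ->
    2 * arcsinh beta / ln (1 + 2 * beta / sqrt (1 + beta ^ 2)) <= A.
Proof.
  intros Hb Hh A [HA1 HA].
  set (x := (0,beta) : pt). set (y := (0,-beta) : pt).
  assert (Gx : inG x) by (split; intro E; injection E; lra).
  assert (Gy : inG y) by (split; intro E; injection E; lra).
  assert (Hs : 0 < sqrt (1 + beta^2)) by (apply sqrt_lt_R0; nra).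
  assert (Ej : jG x y = ln (1 + 2 * beta / sqrt (1 + beta ^ 2))).
  { unfold jG. f_equal. f_equal.
    assert (Dxy : dist2 x y = 2 * beta).
    { unfold dist2, x, y; cbn [fst snd].
      replace ((0 - 0) ^ 2 + (beta - - beta) ^ 2) with ((2*beta)^2) by ring.
      apply sqrt_pow2; lra. }
    assert (Dx : dG x = sqrt (1 + beta^2)).
    { unfold dG, dist2, x, e1, me1; cbn [fst snd].
      replace ((0 - 1) ^ 2 + (beta - 0) ^ 2) with (1 + beta^2) by ring.
      replace ((0 - -1) ^ 2 + (beta - 0) ^ 2) with (1 + beta^2) by ring.
      apply Rmin_left; lra. }
    assert (Dy : dG y = sqrt (1 + beta^2)).
    { unfold dG, dist2, y, e1, me1; cbn [fst snd].
      replace ((0 - 1) ^ 2 + (-beta - 0) ^ 2) with (1 + beta^2) by ring.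
      replace ((0 - -1) ^ 2 + (-beta - 0) ^ 2) with (1 + beta^2) by ring.
      apply Rmin_left; lra. }
    rewrite Dxy, Dx, Dy. rewrite Rmin_left by lra. reflexivity. }
  set (j := ln (1 + 2 * beta / sqrt (1 + beta ^ 2))) in *.
  assert (Hj : 0 < j).
  { unfold j. rewrite <- ln_1. apply ln_increasing. lra.
    assert (0 < 2 * beta / sqrt (1 + beta^2)) by (apply Rdiv_lt_0_compat; lra). lra. }
  set (C := 2 * arcsinh beta).
  assert (HC : 0 < C).
  { unfold C. assert (0 < arcsinh beta) by (rewrite <- arcsinh_0; apply arcsinh_lt; auto). lra. }
  assert (Hpsi : psi x - psi y = C).
  { unfold x, y, C. rewrite psi_top, psi_bot; auto. ring. }
  assert (Heps : forall eps, 0 < eps -> C <= A * j + eps).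
  { intros eps He. destruct (HA x y Gx Gy eps He) as [g [Hadm Hli]].
    rewrite Ej in Hli. fold j in Hli.
    apply limit_rho; auto. intros rho Hr0 Hr1. rewrite <- Hpsi.
    eapply curve_bound; eauto. }
  assert (HCA : C <= A * j).
  { destruct (Rle_dec C (A*j)) as [|N]; auto. exfalso.
    assert (H := Heps ((C - A*j)/2) ltac:(lra)). lra. }
  unfold Rdiv. fold C.
  apply Rmult_le_reg_r with j; auto.
  rewrite Rmult_assoc, Rinv_l by lra. lra.
Qed.
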